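(* If $[w,n] \in \mathbb{W}$ and $\alpha,\beta \vDash \ell(w)$ have $\mathrm{Peak}(w) = I(\alpha)$ and $\mathrm{Val}(w) = I(\beta)$ then $\Psi_{>|\leq}([w,n]) = K_\alpha$, $\Psi_{<|\geq}([w,n]) = K_\beta$, $\Psi_{\geq|<}([w^{\tt r},n]) = K_{\alpha^{\flat}}$, and $\Psi_{\leq|>}([w^{\tt r},n]) = K_{\beta^{\flat}}$.
   Context: Let $\Bbbk$ be a field (of characteristic not two, so that peak functions make sense as a basis). For a word $w=w_1\cdots w_m$ of positive integers with $\max(w)\le n$, $[w,n]$ is the linear endomorphism of the $\Bbbk$-span of all words sending a word $v$ of length $n$ to $v_{w_1}\cdots v_{w_m}$ and others to $0$; $\mathbb{W}$ is the set of these and $\textbf{W}$ their span, a graded bialgebra (degree $\ell(w)$) with product $[v,m]\otimes[w,n]\mapsto[v\sqcup\!\sqcup(w\uparrow m),m+n]$, coproduct $\Delta_\odot([w,n])=\sum_i[w_1\cdots w_i,n]\otimes[w_{i+1}\cdots w_m,n]$ and counit $1$ on $[\emptyset,n]$, $0$ otherwise. $\zeta_\le,\zeta_\ge,\zeta_<,\zeta_>:\textbf{W}\to\Bbbk$ send $[w,n]$ to $1$ if $w$ is weakly increasing, weakly decreasing, strictly increasing, strictly decreasing respectively, and $0$ otherwise. For $\bullet,\circ$ among these symbols, $\zeta_{\bullet|\circ}=\nabla_\Bbbk\circ(\zeta_\bullet\otimes\zeta_\circ)\circ\Delta_\odot$, and $\Psi_{\bullet|\circ}(x)=\sum_\gamma(\zeta_{\bullet|\circ})_\gamma(x)M_\gamma$,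 where for $\gamma=(\gamma_1,\dots,\gamma_k)$, $(\zeta)_\gamma$ is the iterated coproduct into $\textbf{W}^{\otimes k}$, projection onto degrees $\gamma_1,\dots,\gamma_k$, $\zeta^{\otimes k}$, and multiplication; this is the unique combinatorial bialgebra morphism $(\textbf{W},\zeta_{\bullet|\circ})\to(\textsf{QSym},\zeta_{\textsf{QSym}})$. For $\alpha=(\alpha_1,\dots,\alpha_l)\vDash n$, $I(\alpha)=\{\alpha_1,\dots,\alpha_1+\cdots+\alpha_{l-1}\}$; $\alpha$ is a peak composition if $\alpha_i\ge2$ for $i<l$, and then $K_\alpha=\sum_{\beta\vDash n,\ I(\alpha)\subseteq I(\beta)\cup(I(\beta)+1)}2^{\ell(\beta)}M_\beta$ and $\alpha^\flat=(\alpha_l+1,\alpha_{l-1},\dots,\alpha_2,\alpha_1-1)$. For a word $w$, $w^{\tt r}$ is its reversal, $\mathrm{Peak}(w)=\{i:1<i<\ell(w),\ w_{i-1}\le w_i>w_{i+1}\}$, $\mathrm{Val}(w)=\{i:1<i<\ell(w),\ w_{i-1}\ge w_i<w_{i+1}\}$. *)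

(* Defs.v *)
From mathcomp Require Import all_boot all_order all_algebra.
Set Implicit Arguments. Unset Strict Implicit. Unset Printing Implicit Defensive.
Import GRing.Theory.

Definition Wbasis := (seq nat * nat)%type.

Definition in_W (x : Wbasis) : bool := all (fun a => (0 < a) && (a <= x.2)) x.1.

Definition is_composition (g : seq nat) : bool := all (fun a => 0 < a) g.
Definition is_comp (m : nat) (g : seq nat) : bool := is_composition g && (sumn g == m).

Definition Iset (a : seq nat) : seq nat :=
  [seq sumn (take i a) | i <- iota 1 (size a).-1].

(* 1-indexed letters: w_i = nth 0 w (i-1). *)
Definition Peak (w : seq nat) : seq nat :=
  [seq i <- iota 2 (size w - 2) |
     (nth 0 w (i - 2) <= nth 0 w (i - 1)) && (nth 0 w i < nth 0 w (i - 1))].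
Definition Val (w : seq nat) : seq nat :=
  [seq i <- iota 2 (size w - 2) |
     (nth 0 w (i - 1) <= nth 0 w (i - 2)) && (nth 0 w (i - 1) < nth 0 w i)].

(* alpha^flat = (alpha_l + 1, alpha_{l-1}, ..., alpha_2, alpha_1 - 1)
   (for l = 1 this gives (alpha_1); for the empty composition, empty). *)
Definition flat (a : seq nat) : seq nat :=
  match rev a with
  | [::] => [::]
  | x :: t => let u := x.+1 :: t in rcons (take (size u).-1 u) (last 0 u).-1
  end.

(* All ways to write w as a concatenation u_1 ... u_k of k (possibly empty)
   consecutive factors: the terms of the iterated coproduct Delta_odot^{(k)}. *)
Fixpoint splits (k : nat) (w : seq nat) : seq (seq (seq nat)) :=
  match k with
  | 0 => if w is [::] then [:: [::]] else [::]
  | k'.+1 => [seq take i w :: t | i <- iota 0 (size w).+1, t <- splits k' (drop i w)]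
  end.

Section QSymDefs.
Variable F : fieldType.
Local Open Scope ring_scope.

(* An element of QSym, given by its coefficients on the monomial basis M_gamma
   (gamma ranging over compositions). *)
Definition qsym := seq nat -> F.
Definition qsym_eq (f g : qsym) : Prop :=
  forall gam : seq nat, is_composition gam -> f gam = g gam.

Definition zeta (r : rel nat) (x : Wbasis) : F := (sorted r x.1)%:R.

Definition zeta_conv (r s : rel nat) (x : Wbasis) : F :=
  \sum_(p <- splits 2 x.1) zeta r (nth [::] p 0, x.2) * zeta s (nth [::] p 1, x.2).

Definition Psi (r s : rel nat) (x : Wbasis) : qsym :=
  fun gam => \sum_(p <- splits (size gam) x.1 | [seq size u | u <- p] == gam)
               \prod_(u <- p) zeta_conv r s (u, x.2).

Definition Kpeak (a : seq nat) : qsym :=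
  fun gam => if (sumn gam == sumn a) &&
                all (fun s => (s \in Iset gam) || (s \in [seq i.+1 | i <- Iset gam])) (Iset a)
             then 2 ^+ size gam else 0.

End QSymDefs.

(* Main.v *)
Require Import Defs.
From mathcomp Require Import all_boot all_order all_algebra zify.
Set Implicit Arguments. Unset Strict Implicit. Unset Printing Implicit Defensive.


Definition badp (r : rel nat) (u : seq nat) (p : nat) : bool :=
  [&& 1 < p, p < size u, ~~ r (nth 0 u (p-2)) (nth 0 u (p-1)) & r (nth 0 u (p-1)) (nth 0 u p)].

Fixpoint nobad (r : rel nat) (u : seq nat) : bool :=
  match u with
  | x :: ((y :: z :: _) as t) => ~~ (~~ r x y && r y z) && nobad r t
  | _ => true
  end.

Lemma badp_cons r x t p : 1 < p -> badp r (x :: t) p.+1 = badp r t p.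
Proof.
case: p => [|[|p]] // _; rewrite /badp /=.
by rewrite !subn1 !subn2 /=.
Qed.

Lemma nobadP r u : nobad r u <-> (forall p, ~~ badp r u p).
Proof.
elim: u => [|x t IH]; first by split => // _ p; rewrite /badp /= andbF.
case: t IH => [|y [|z t]] IH.
- by split => [_ [|[|p]]|_].
- by split => [_ [|[|[|p]]]|_].
have -> : nobad r [:: x, y, z & t] = ~~ (~~ r x y && r y z) && nobad r [:: y, z & t] by [].
split.
- case/andP => h1 /IH h2 [|[|[|p]]].
  + by rewrite /badp.
  + by rewrite /badp.
  + by rewrite /badp /=.
  + by rewrite badp_cons.
- move=> H; apply/andP; split; first by have := H 2; rewrite /badp /=.
  apply/IH => -[|[|p]]; try by rewrite /badp.
  by rewrite -(badp_cons _ x).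
Qed.

Definition cnt (r : rel nat) (u : seq nat) : nat :=
  count (fun i => sorted r (take i u) && sorted (fun x y => ~~ r x y) (drop i u))
        (iota 0 (size u).+1).

Lemma nobad_sorted r x y t : ~~ r x y ->
  nobad r (x :: y :: t) = sorted (fun a b => ~~ r a b) (x :: y :: t).
Proof.
elim: t x y => [|z t IH] x y hxy; first by rewrite /= hxy.
have -> : nobad r [:: x, y, z & t] = ~~ (~~ r x y && r y z) && nobad r [:: y, z & t] by [].
case hyz: (r y z); first by rewrite /= hyz (negbTE hxy) andbF.
by rewrite (IH y z) ?hyz //= hxy hyz.
Qed.

Lemma cnt_cons r x t : cnt r (x :: t) =
  sorted (fun a b => ~~ r a b) (x :: t) +
  count (fun i => sorted r (x :: take i t) && sorted (fun a b => ~~ r a b) (drop i t))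
        (iota 0 (size t).+1).
Proof.
rewrite /cnt /= -[2]/(1 + 1) iotaDl count_map; congr (_ + (_ + _)).

Qed.

Lemma cnt_aux (r : rel nat) (x y : nat) (t : seq nat) :
  count (fun i => sorted r (x :: take i (y :: t)) && sorted (fun a b => ~~ r a b) (drop i (y :: t)))
        (iota 0 (size t).+2) =
  sorted (fun a b => ~~ r a b) (y :: t) +
  (if r x y then count (fun i => sorted r (y :: take i t) && sorted (fun a b => ~~ r a b) (drop i t))
        (iota 0 (size t).+1) else 0).
Proof.
rewrite [iota 0 _]/= [count _ (_ :: _)]/= -[2]/(2 + 0) iotaDl count_map.
congr (_ + _).
case hxy: (r x y) => /=.
  rewrite -[1]/(1 + 0) iotaDl count_map /=.
  by apply/eqP; rewrite eqn_add2l; apply/eqP; apply: eq_count => i /=; rewrite hxy addn0.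
apply/eqP; rewrite -leqn0 leqNgt -has_count; apply/hasPn => i _ /=.
by rewrite !addSn add0n /= hxy.
Qed.

Lemma cnt_nobad r u : u != [::] -> cnt r u = if nobad r u then 2 else 0.
Proof.
elim: u => [|x t IH] // _.
case: t IH => [|y t] IH; first by rewrite /cnt.
rewrite cnt_cons [size _]/= cnt_aux.
have IH' := IH isT; rewrite cnt_cons in IH'.
case hxy: (r x y).
  have -> : sorted (fun a b => ~~ r a b) [:: x, y & t] = false by rewrite /= hxy.
  rewrite add0n IH'.
  by case: t {IH IH'} => [|z t] //=; rewrite hxy.
rewrite addn0 (nobad_sorted t (negbT hxy)) /= hxy /=.
by case: (path _ _ _).
Qed.



Definition inI (gam : seq nat) (p : nat) : bool :=
  (p \in Iset gam) || (p \in [seq i.+1 | i <- Iset gam]).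

Definition Bad (r : rel nat) (w : seq nat) : seq nat :=
  [seq i <- iota 2 (size w - 2) |
     ~~ r (nth 0 w (i - 2)) (nth 0 w (i - 1)) && r (nth 0 w (i - 1)) (nth 0 w i)].

Lemma mem_Bad r w p : (p \in Bad r w) = badp r w p.
Proof.
rewrite mem_filter mem_iota /badp.
have -> : (2 <= p < 2 + (size w - 2)) = (1 < p) && (p < size w).
  by apply/idP/idP => /andP [h1 h2]; apply/andP; split; lia.
by rewrite andbC -!andbA.
Qed.

Lemma Iset_cons g g' t : Iset [:: g, g' & t] = g :: [seq g + i | i <- Iset (g' :: t)].
Proof.
rewrite /Iset /= addn0; congr (_ :: _).
rewrite -[2]/(1 + 1) iotaDl -!map_comp; apply: eq_map => i /=.
by rewrite add0n.
Qed.

Lemma Iset_ge g gam x : x \in Iset (g :: gam) -> g <= x.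
Proof.
by case/mapP => -[|i] /=; rewrite mem_iota // => _ ->; apply: leq_addr.
Qed.

Lemma inI_lt g gam p : p < g -> inI (g :: gam) p = false.
Proof.
move=> hp; apply/negbTE; rewrite negb_or; apply/andP; split.
  by apply/negP => /Iset_ge; lia.
by apply/negP => /mapP [x /Iset_ge hx hpx]; lia.
Qed.

Lemma inI_shift g g' t q : 1 < q -> inI [:: g, g' & t] (g + q) = inI (g' :: t) q.
Proof.
move=> hq; rewrite /inI Iset_cons /= !in_cons.
have -> : (g + q == g) = false by apply/negbTE; lia.
have -> : (g + q == g.+1) = false by apply/negbTE; lia.
rewrite /= (mem_map (@addnI g)); congr (_ || _).
rewrite -map_comp (@eq_map _ _ _ (addn g \o succn)); last by move=> i /=; rewrite addnS.
by rewrite map_comp (mem_map (@addnI g)).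
Qed.

Lemma badp_take r w g p : g <= size w -> p < g -> badp r (take g w) p = badp r w p.
Proof.
move=> hg hp; rewrite /badp size_take_min (minn_idPl hg) hp (leq_trans hp hg) /=.
case: (ltnP 1 p) => h1 //=.
by rewrite !nth_take //; lia.
Qed.

Lemma badp_take_ge r w g p : g <= p -> badp r (take g w) p = false.
Proof.
move=> hp; rewrite /badp size_take_min.
have -> : (p < minn g (size w)) = false by apply/negbTE; lia.
by rewrite /= andbF.
Qed.

Lemma badp_drop r w g q : badp r (drop g w) q = (1 < q) && badp r w (g + q).
Proof.
rewrite /badp size_drop !nth_drop.
case: (ltnP 1 q) => hq //=.
have -> : g + (q - 2) = g + q - 2 by lia.
have -> : g + (q - 1) = g + q - 1 by lia.
have -> : (q < size w - g) = (g + q < size w) by apply/idP/idP; lia.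
by have -> : 1 < g + q by lia.
Qed.

Lemma reshape_nobad r gam w : sumn gam = size w ->
  all (nobad r) (reshape gam w) <-> (forall p, badp r w p -> inI gam p).
Proof.
elim: gam w => [|g gam IH] w hs.
  have -> : w = [::] by apply: size0nil.
  by split => // _ p; rewrite /badp andbF.
case: gam IH hs => [|g' t] IH hs.
  rewrite /= andbT take_oversize; last by rewrite -hs /= addn0.
  rewrite nobadP; split => H p; first by rewrite (negbTE (H p)).
  by apply/negP => /H.
rewrite [reshape _ _]/= [all _ _]/=.
have hg : g <= size w by rewrite -hs leq_addr.
have hs' : sumn (g' :: t) = size (drop g w) by rewrite size_drop -hs addKn.
split.
- case/andP => /nobadP h1 /(IH _ hs') h2 p hp.
  case: (ltnP p g) => hpg.
    by move: (h1 p); rewrite badp_take // hp.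
  case: (ltnP (g.+1) p) => hpg2.
    have := h2 (p - g); rewrite badp_drop.
    have -> : g + (p - g) = p by lia.
    rewrite hp andbT; have -> : 1 < p - g by lia.
    by move=> /(_ isT); rewrite -(inI_shift g) ?subnKC //; lia.
  have [->|->] : p = g \/ p = g.+1 by lia.
    by rewrite /inI Iset_cons mem_head.
  by rewrite /inI Iset_cons /= !in_cons eqxx !orbT.
- move=> H; apply/andP; split.
    apply/nobadP => p; case: (ltnP p g) => hpg; last by rewrite badp_take_ge.
    rewrite badp_take //; apply/negP => /H.
    by rewrite inI_lt.
  apply/(IH _ hs') => q; rewrite badp_drop => /andP [hq /H].
  by rewrite inI_shift.
Qed.


Lemma badp_rev (r r' : rel nat) w j : (forall x y, r' x y = ~~ r y x) ->
  badp r' (rev w) j = (j < size w) && badp r w (size w - j).+1.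
Proof.
move=> hr; rewrite /badp size_rev.
case: (ltnP 1 j) => h1; case: (ltnP j (size w)) => h2 //=.
- rewrite !nth_rev; try lia.
  have -> : size w - (j - 2).+1 = (size w - j).+1 by lia.
  have -> : size w - (j - 1).+1 = (size w - j).+1 - 1 by lia.
  have -> : size w - j.+1 = (size w - j).+1 - 2 by lia.
  have -> : (size w - j).+1 < size w by lia.
  have -> : 1 < (size w - j).+1 by lia.
  by rewrite !hr negbK andbC.
- have -> : ((size w - j).+1 < size w) = false by apply/negbTE; lia.
  by rewrite andbF.
Qed.

Lemma sumn_drop a k : sumn (drop k a) = sumn a - sumn (take k a).
Proof. by rewrite -{2}(cat_take_drop k a) sumn_cat addKn. Qed.

Lemma drop_last (y : nat) t : drop (size t) (y :: t) = [:: last y t].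
Proof. by elim: t y => [|z t IH] y //=; rewrite -IH. Qed.

Lemma size_flat a : size (flat a) = size a.
Proof.
rewrite /flat; case E: (rev a) => [|x t].
  by rewrite -(size_rev a) E.
by rewrite size_rcons size_takel //= -(size_rev a) E.
Qed.

Lemma flat_take a i : 0 < i < size a -> sumn (take i (flat a)) = (sumn (take i (rev a))).+1.
Proof.
move=> /andP [hi0 hi]; rewrite /flat; case E: (rev a) => [|x t].
  by move: hi; rewrite -(size_rev a) E.
have hs : size a = (size t).+1 by rewrite -(size_rev a) E.
rewrite -cats1 takel_cat; last by rewrite size_takel /=; lia.
rewrite take_takel; last by rewrite /=; lia.
by case: i hi0 hi => [|i] // _ hi /=; lia.
Qed.

Lemma sumn_flat a : is_composition a -> sumn (flat a) = sumn a.
Proof.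
move=> ha; rewrite /flat; case E: (rev a) => [|x t].
  by have -> : a = [::] by apply: size0nil; rewrite -(size_rev a) E.
have hpos : all (fun b => 0 < b) (x.+1 :: t).
  by move: ha; rewrite /is_composition -all_rev E /= => /andP [].
have hl : 0 < last x.+1 t by move/allP: hpos; apply; apply: mem_last.
have hsum : sumn (take (size t) (x.+1 :: t)) + last x.+1 t = sumn (x.+1 :: t).
  by rewrite -{2}(cat_take_drop (size t) (x.+1 :: t)) sumn_cat drop_last /= addn0.
rewrite -cats1 sumn_cat /= addn0 -(sumn_rev a) E /=.
move: hsum; rewrite /=; lia.
Qed.

Lemma Iset_flat a : Iset (flat a) =i [seq (sumn a - i).+1 | i <- Iset a].
Proof.
move=> j; rewrite /Iset size_flat; apply/idP/idP.
- case/mapP => i; rewrite mem_iota => hi ->.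
  rewrite flat_take; last lia.
  rewrite take_rev sumn_rev sumn_drop.
  apply/mapP; exists (sumn (take (size a - i) a)) => //.
  by apply/mapP; exists (size a - i) => //; rewrite mem_iota; lia.
- case/mapP => i' /mapP [k]; rewrite mem_iota => hk -> ->.
  apply/mapP; exists (size a - k); first by rewrite mem_iota; lia.
  rewrite flat_take; last lia.
  by rewrite take_rev sumn_rev sumn_drop; have -> : size a - (size a - k) = k by lia.
Qed.

Lemma rev_Bad (r r' : rel nat) w a : (forall x y, r' x y = ~~ r y x) ->
  sumn a = size w -> Bad r w =i Iset a -> Bad r' (rev w) =i Iset (flat a).
Proof.
move=> hr hs hB j; rewrite Iset_flat mem_Bad (badp_rev _ _ hr) hs.
have bnd : forall i, i \in Iset a -> 1 < i < size w.
  by move=> i; rewrite -hB mem_Bad /badp => /and4P [-> -> _ _].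
apply/idP/idP.
- case/andP => hj hb; apply/mapP; exists (size w - j).+1; first by rewrite -hB mem_Bad.
  have := bnd (size w - j).+1; rewrite -hB mem_Bad => /(_ hb); lia.
- case/mapP => i hi ->; have hb := bnd i hi; rewrite -hB mem_Bad in hi.
  have -> : (size w - (size w - i).+1).+1 = i by lia.
  rewrite hi andbT; lia.
Qed.

Section FieldPart.
Import GRing.Theory.
Local Open Scope ring_scope.

Lemma sum_iota_if (R : nmodType) (m g : nat) (P : pred nat) (X : nat -> R) :
  (forall i, (i < m)%N -> P i = (i == g)) ->
  \sum_(i <- iota 0 m) (if P i then X i else 0) = if (g < m)%N then X g else 0.
Proof.
elim: m => [|m IH] H; first by rewrite big_nil.
rewrite -addn1 iotaD big_cat /= big_seq1 IH; last by move=> i hi; apply: H; lia.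
rewrite add0n.
rewrite H; last by lia.
case: eqP => [->|hne].
  by rewrite ltnn add0r addn1 ltnSn.
rewrite addr0; have -> : (g < m + 1)%N = (g < m)%N by apply/idP/idP; lia.
by [].
Qed.

Lemma sum_allpairs (R : nmodType) (s : seq nat) (f : nat -> seq (seq (seq nat)))
  (h : nat -> seq (seq nat) -> seq (seq nat)) (F : seq (seq nat) -> R) :
  \sum_(p <- [seq h i t | i <- s, t <- f i]) F p = \sum_(i <- s) \sum_(t <- f i) F (h i t).
Proof. exact: big_allpairs_dep. Qed.

Lemma sum_splits (R : nmodType) (gam w : seq nat) (G : seq (seq nat) -> R) :
  \sum_(p <- splits (size gam) w | [seq size u | u <- p] == gam) G p =
  if sumn gam == size w then G (reshape gam w) else 0.
Proof.
elim: gam w G => [|g gam IH] w G.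
  by case: w => [|a w]; rewrite /= ?big_cons big_nil /= ?addr0.
have -> : splits (size (g :: gam)) w = [seq take i w :: t | i <- iota 0 (size w).+1, t <- splits (size gam) (drop i w)] by [].
rewrite big_mkcond sum_allpairs.
have inner : forall i, (i <= size w)%N ->
   \sum_(t <- splits (size gam) (drop i w))
     (if [seq size u | u <- take i w :: t] == g :: gam then G (take i w :: t) else 0)
   = if i == g then (if sumn gam == size (drop i w) then G (take i w :: reshape gam (drop i w)) else 0)
     else 0.
  move=> i hi; rewrite -(IH _ (fun t => G (take i w :: t))).
  case: eqP => [<-|hne]; last first.
    rewrite big1 // => t _.
    have -> : ([seq size u | u <- take i w :: t] == g :: gam) = false.
      by rewrite /= eqseq_cons size_takel //; case: eqP.
    by [].
  rewrite [in RHS]big_mkcond; apply: eq_bigr => t _.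
  by rewrite /= eqseq_cons size_takel // eqxx.
rewrite big_seq (eq_bigr _ (fun i hi => inner i _)); last first.
  by move=> i; rewrite mem_iota; lia.
rewrite -big_seq (@sum_iota_if _ _ g (fun i => i == g)
  (fun i => if sumn gam == size (drop i w) then G (take i w :: reshape gam (drop i w)) else 0)) //.
rewrite /= size_drop.
case: (ltnP g (size w).+1) => hg.
  have -> : (sumn gam == size w - g)%N = (g + sumn gam == size w)%N by apply/eqP/eqP; lia.
  by [].
have -> : (g + sumn gam == size w)%N = false by apply/negbTE/eqP; lia.
by [].
Qed.



Lemma sum_splits1 (R : nmodType) (v : seq nat) (H : seq (seq nat) -> R) :
  \sum_(t <- splits 1 v) H t = H [:: v].
Proof.
have -> : splits 1 v = [seq take j v :: t | j <- iota 0 (size v).+1, t <- splits 0 (drop j v)] by [].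
rewrite sum_allpairs.
have inner : forall j, (j <= size v)%N -> \sum_(t <- splits 0 (drop j v)) H (take j v :: t)
   = if j == size v then H [:: take j v] else 0.
  move=> j hj; case E: (drop j v) => [|a l] /=.
    have -> : j == size v by move/(congr1 size): E; rewrite size_drop /= => E'; apply/eqP; lia.
    by rewrite big_seq1.
  have -> : (j == size v) = false by move/(congr1 size): E; rewrite size_drop /= => E'; apply/negbTE/eqP; lia.
  by rewrite big_nil.
rewrite big_seq (eq_bigr _ (fun i hi => inner i _)); last first.
  by move=> i; rewrite mem_iota; lia.
rewrite -big_seq (@sum_iota_if _ _ (size v) (fun i => i == size v) (fun j => H [:: take j v])) //.
by rewrite ltnSn take_size.
Qed.

Lemma sum_natr (R : semiRingType) (P : pred nat) (s : seq nat) :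
  \sum_(i <- s) ((P i)%:R : R) = (count P s)%:R.
Proof. by elim: s => [|x s IH]; rewrite ?big_nil // big_cons IH /= natrD. Qed.

Lemma zeta_conv_count (F : fieldType) r s u n :
  zeta_conv F r s (u, n) =
  (count (fun i => sorted r (take i u) && sorted s (drop i u)) (iota 0 (size u).+1))%:R.
Proof.
rewrite /zeta_conv.
have -> : splits 2 u = [seq take i u :: t | i <- iota 0 (size u).+1, t <- splits 1 (drop i u)] by [].
rewrite sum_allpairs -sum_natr; apply: eq_bigr => i _.
rewrite (sum_splits1 (drop i u) (fun t => zeta F r (nth [::] (take i u :: t) 0, n) *
                                          zeta F s (nth [::] (take i u :: t) 1, n))) /=.
by rewrite /zeta /= -natrM mulnb.
Qed.

Lemma prod_if (R : comSemiRingType) (T : Type) (P : pred T) (c : R) (l : seq T) :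
  \prod_(u <- l) (if P u then c else 0) = if all P l then c ^+ size l else 0.
Proof.
elim: l => [|x l IH]; first by rewrite big_nil expr0.
rewrite big_cons IH /=; case: (P x); case: (all P l); rewrite ?mul0r ?mulr0 //=.
by rewrite exprS.
Qed.

Lemma sorted_ext (s s' : rel nat) l : (forall x y, s x y = s' x y) -> sorted s l = sorted s' l.
Proof. by move=> h; case: l => //= x l; apply: eq_path. Qed.

Lemma Psi_gen (F : fieldType) (r s : rel nat) (hs : forall x y, s x y = ~~ r x y)
  (w : seq nat) (n : nat) (gam : seq nat) : is_composition gam ->
  Psi F r s (w, n) gam =
  if (sumn gam == size w) && all (inI gam) (Bad r w) then 2 ^+ size gam else 0.
Proof.
move=> hg; rewrite /Psi /= sum_splits.
case: eqP => hsum /=; last by [].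
transitivity (\prod_(u <- reshape gam w) (if nobad r u then 2 else 0 : F)); last first.
  rewrite prod_if size_reshape.
  have -> : all (nobad r) (reshape gam w) = all (inI gam) (Bad r w).
    apply/idP/idP.
      move/(@reshape_nobad r gam w hsum) => H; apply/allP => p; rewrite mem_Bad; exact: H.
    move/allP => H; apply/(@reshape_nobad r gam w hsum) => p hp; apply: H; by rewrite mem_Bad.
  by [].
rewrite big_seq [RHS]big_seq; apply: eq_bigr => u hu.
  rewrite zeta_conv_count.
  have hu0 : u != [::].
    have : size u \in shape (reshape gam w) by apply: map_f.
    rewrite reshapeKl ?hsum //.
    move/allP: hg => hg /hg; by case: u {hu}.
  rewrite (eq_count (a2 := fun i => sorted r (take i u) && sorted (fun x y => ~~ r x y) (drop i u))).
    by rewrite -/(cnt r u) cnt_nobad //; case: (nobad r u).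
  by move=> i /=; rewrite (sorted_ext _ hs).
Qed.
End FieldPart.


Theorem proposition5p7 (F : fieldType) (hF : (2%:R : F)%R != 0%R)
  (w : seq nat) (n : nat) (hw : in_W (w, n))
  (alpha beta : seq nat)
  (halpha : is_comp (size w) alpha) (hbeta : is_comp (size w) beta)
  (hPeak : Peak w =i Iset alpha) (hVal : Val w =i Iset beta) :
  [/\ qsym_eq (Psi F gtn leq (w, n)) (Kpeak F alpha),
      qsym_eq (Psi F ltn geq (w, n)) (Kpeak F beta),
      qsym_eq (Psi F geq ltn (rev w, n)) (Kpeak F (flat alpha))
    & qsym_eq (Psi F leq gtn (rev w, n)) (Kpeak F (flat beta))].
Proof.
case/andP: halpha => hca /eqP hsa.
case/andP: hbeta => hcb /eqP hsb.
have hP : Bad gtn w =i Iset alpha.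
  move=> p; rewrite -hPeak.
  have -> : Peak w = Bad gtn w by apply: eq_filter => i; rewrite /= leqNgt.
  by [].
have hV : Bad ltn w =i Iset beta.
  move=> p; rewrite -hVal.
  have -> : Val w = Bad ltn w by apply: eq_filter => i; rewrite /= leqNgt.
  by [].
split => gam hg.
- rewrite (@Psi_gen F gtn leq) //; last by move=> x y; rewrite /= leqNgt.
  by rewrite /Kpeak hsa (eq_all_r hP).
- rewrite (@Psi_gen F ltn geq) //; last by move=> x y; rewrite /= leqNgt.
  by rewrite /Kpeak hsb (eq_all_r hV).
- rewrite (@Psi_gen F geq ltn) //; last by move=> x y; rewrite /= ltnNge.
  rewrite /Kpeak sumn_flat // hsa size_rev.
  by rewrite (eq_all_r (@rev_Bad gtn geq w alpha _ hsa hP)) // => x y; rewrite /= leqNgt.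
- rewrite (@Psi_gen F leq gtn) //; last by move=> x y; rewrite /= ltnNge.
  rewrite /Kpeak sumn_flat // hsb size_rev.
  by rewrite (eq_all_r (@rev_Bad ltn leq w beta _ hsb hV)) // => x y; rewrite /= leqNgt.
Qed.
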